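(* Let $\lambda\supseteq\mu$ be partitions and $T$ a Dyck tiling of $\lambda\setminus\mu$. Then: (1) $T$ is left-cover-expansive if and only if for every tile $t$ of $T$, $\mathtt{NW}(\operatorname{st}t)\notin\lambda\setminus\mu$; (2) $T$ is right-cover-expansive if and only if for every tile $t$ of $T$, $\mathtt{NE}(\operatorname{en}t)\notin\lambda\setminus\mu$.
   Context: Partitions are identified with Young diagrams $\{(a,b)\in\mathbb N^2:b\le\lambda_a\}$; nodes are elements of $\mathbb N^2$; $(a,b)$ has height $a+b$ and lies in column $b-a$ (smaller column = further left). $\mathtt{NE}(\mathfrak n)=\mathfrak n+(0,1)$, $\mathtt{SW}(\mathfrak n)=\mathfrak n-(0,1)$, $\mathtt{NW}(\mathfrak n)=\mathfrak n+(1,0)$, $\mathtt{SE}(\mathfrak n)=\mathfrak n-(1,0)$. A tile is a finite nonempty set of nodes orderable $\mathfrak n_1,\dots,\mathfrak n_r$ with $\mathfrak n_{i+1}\in\{\mathtt{NE}(\mathfrak n_i),\mathtt{SE}(\mathfrak n_i)\}$; $\operatorname{st}t$ is its leftmost node and $\operatorname{en}t$ its rightmost node; it is a Dyck tile if $\operatorname{st}t,\operatorname{en}t$ both attain the maximal height of nodes of $t$. A Dyck tiling of $\lambda\setminus\mu$ is a partition of $\lambda\setminus\mu$ into Dyck tiles; $\operatorname{tile}(\mathfrak n)$ is the tile containing $\mathfrak n$. The tiling is left-cover-expansive if whenever $\mathfrak a,\mathtt{SE}(\mathfrak a)\in\lambda\setminus\mu$, $\operatorname{st}(\operatorname{tile}(\mathtt{SE}(\mathfrak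 a)))$ lies weakly to the left of $\operatorname{st}(\operatorname{tile}(\mathfrak a))$; right-cover-expansive if whenever $\mathfrak a,\mathtt{SW}(\mathfrak a)\in\lambda\setminus\mu$, $\operatorname{en}(\operatorname{tile}(\mathtt{SW}(\mathfrak a)))$ lies weakly to the right of $\operatorname{en}(\operatorname{tile}(\mathfrak a))$. *)

(* Defs.v *)
From mathcomp Require Import all_boot all_algebra.
Set Implicit Arguments. Unset Strict Implicit. Unset Printing Implicit Defensive.
Import GRing.Theory Num.Theory.

(* Nodes are pairs (a,b) of naturals; Young diagrams use 1-indexed rows and
   columns as in the paper: (a,b) with a >= 1, 1 <= b <= lambda_a. *)
Definition node := (nat * nat)%type.

(* A partition is a weakly decreasing sequence of naturals
   (lambda_1 >= lambda_2 >= ...); lambda_a = nth 0 lam a.-1. *)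
Definition is_partition (lam : seq nat) : bool := sorted geq lam.

Definition in_diag (lam : seq nat) (n : node) : bool :=
  [&& 1 <= n.1, 1 <= n.2 & n.2 <= nth 0 lam n.1.-1].

Definition diag_sub (mu lam : seq nat) : Prop :=
  forall n, in_diag mu n -> in_diag lam n.

Definition skew (lam mu : seq nat) (n : node) : bool :=
  in_diag lam n && ~~ in_diag mu n.

Definition height (n : node) : nat := n.1 + n.2.
Definition column (n : node) : int := (n.2%:Z - n.1%:Z)%R.

Definition NE (n : node) : node := (n.1, n.2.+1).
Definition SW (n : node) : node := (n.1, n.2.-1).
Definition NW (n : node) : node := (n.1.+1, n.2).
Definition SE (n : node) : node := (n.1.-1, n.2).

(* A tile is represented by its (unique) ordering n_1, ..., n_r with
   n_{i+1} in {NE n_i, SE n_i}; its set of nodes is the set of entries. *)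
Definition tile_step (x y : node) : bool := (y == NE x) || (y == SE x).

Definition is_tile (t : seq node) : bool :=
  if t is x :: s then path tile_step x s else false.

Definition st (t : seq node) : node := head (0, 0) t.
Definition en (t : seq node) : node := last (0, 0) t.

Definition is_dyck_tile (t : seq node) : bool :=
  is_tile t &&
  all (fun n => (height n <= height (st t)) && (height n <= height (en t))) t.

Definition dyck_tiling (lam mu : seq nat) (T : seq (seq node)) : Prop :=
  [/\ forall t, t \in T -> is_dyck_tile t,
      forall t n, t \in T -> n \in t -> skew lam mu n &
      forall n, skew lam mu n -> count (fun t => n \in t) T = 1].

Definition tile_of (T : seq (seq node)) (n : node) : seq node :=
  nth [::] T (find (fun t => n \in t) T).

Definition left_cover_expansive (lam mu : seq nat) (T : seq (seq node)) : Prop :=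
  forall a : node, skew lam mu a -> skew lam mu (SE a) ->
    (column (st (tile_of T (SE a))) <= column (st (tile_of T a)))%R.

Definition right_cover_expansive (lam mu : seq nat) (T : seq (seq node)) : Prop :=
  forall a : node, skew lam mu a -> skew lam mu (SW a) ->
    (column (en (tile_of T a)) <= column (en (tile_of T (SW a))))%R.

(* Main.v *)
Require Import Defs.
From mathcomp Require Import all_boot.
From mathcomp Require Import all_algebra zify.
Local Notation skew := Defs.skew.
Set Implicit Arguments. Unset Strict Implicit.

Section Aux.
Variables (lam mu : seq nat) (T : seq (seq node)).
Hypotheses (Hlam : is_partition lam) (Hmu : is_partition mu)
  (HT : dyck_tiling lam mu T).

Lemma diag_down (l : seq nat) p q p' q' : is_partition l ->
  in_diag l (p, q) -> 1 <= p' <= p -> 1 <= q' <= q -> in_diag l (p', q').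
Proof.
move=> Hl /and3P[/= H1 H2 H3] /andP[Hp1 Hp2] /andP[Hq1 Hq2].
apply/and3P; split => //=.
have Hs : p.-1 < size l.
  rewrite ltnNge; apply/negP => Hn; move: H3; rewrite nth_default //; lia.
have Htr : transitive geq by move=> a b c /= ? ?; apply: leq_trans; eauto.
have Hrf : reflexive geq by move=> a /=.
have : nth 0 l p.-1 <= nth 0 l p'.-1.
  apply: (sorted_leq_nth Htr Hrf 0 Hl); rewrite ?inE /=; lia.
lia.
Qed.

Lemma skew_pos (n : node) : skew lam mu n -> 1 <= n.1 /\ 1 <= n.2.
Proof. by case/andP => /and3P[]. Qed.

Lemma skew_up (y : node) k : skew lam mu y -> skew lam mu (y.1 + k, y.2 + k) -> 1 <= k ->
  skew lam mu (NW y) && skew lam mu (NE y).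
Proof.
case: y => y1 y2 /= /andP[Hy Hny] /andP[Hx _] Hk.
move: (Hy) => /and3P[/= ? ? _].
rewrite /Defs.skew /NW /NE /=.
apply/andP; split; apply/andP; split.
- by apply: (@diag_down lam (y1 + k) (y2 + k) _ _ Hlam Hx) => /=; lia.
- apply/negP => Hm; move/negP: Hny; apply; apply: (@diag_down mu y1.+1 y2 _ _ Hmu Hm) => /=; lia.
- by apply: (@diag_down lam (y1 + k) (y2 + k) _ _ Hlam Hx) => /=; lia.
- apply/negP => Hm; move/negP: Hny; apply; apply: (@diag_down mu y1 y2.+1 _ _ Hmu Hm) => /=; lia.
Qed.

Lemma tile_uniq t t' n : t \in T -> t' \in T -> n \in t -> n \in t' -> t = t'.
Proof.
case: HT => _ Hin Hc Ht Ht' Hn Hn'.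
have Hsk := Hin _ _ Ht Hn.
have := Hc _ Hsk; rewrite -size_filter.
have Hf : t \in [seq x <- T | n \in x] by rewrite mem_filter Hn Ht.
have Hf' : t' \in [seq x <- T | n \in x] by rewrite mem_filter Hn' Ht'.
case: [seq x <- T | n \in x] Hf Hf' => [|z [|]] //= .
by rewrite !inE => /eqP -> /eqP ->.
Qed.

Lemma tile_of_in n : skew lam mu n -> tile_of T n \in T /\ n \in tile_of T n.
Proof.
case: HT => _ _ Hc Hn.
have Hh : has (fun t => n \in t) T by rewrite has_count Hc.
split; first by rewrite /tile_of mem_nth // -has_find.
exact: (nth_find [::] Hh).
Qed.

Lemma tile_of_eq t n : t \in T -> n \in t -> tile_of T n = t.
Proof.
move=> Ht Hn.
case: HT => _ Hin _.
have [H1 H2] := tile_of_in (Hin _ _ Ht Hn).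
exact: (tile_uniq H1 Ht H2 Hn).
Qed.

Definition nd (t : seq node) i := nth (0, 0) t i.

Lemma nd_skew t i : t \in T -> i < size t -> skew lam mu (nd t i).
Proof. case: HT => _ Hin _ Ht Hi; apply: Hin Ht _; exact: mem_nth. Qed.

Lemma nd_in t i : i < size t -> nd t i \in t.
Proof. exact: mem_nth. Qed.

Lemma tile_stepP t i : t \in T -> i.+1 < size t ->
  let x := nd t i in let y := nd t i.+1 in
  (y.1 = x.1 /\ y.2 = x.2.+1) \/ (y.1.+1 = x.1 /\ y.2 = x.2).
Proof.
move=> Ht Hi /=.
have [_ _] := skew_pos (nd_skew Ht Hi).
have [Hx1 _] := skew_pos (nd_skew Ht (ltnW Hi)).
case: HT => Hd _ _.
have /andP[Htile _] := Hd _ Ht.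
move: Ht Hi Hx1 Htile; rewrite /nd.
case: t => [|h s] // Ht Hi Hx1 /= /(pathP (0,0)) Hp.
have := Hp i Hi.
rewrite /tile_step /NE /SE /=.
move: Hx1 => /=.
case: (nth (0,0) (h :: s) i) => a b /= Hx1.
case/orP=> /eqP -> /=; [left|right]; split => //; lia.
Qed.

Lemma col_nd t k : t \in T -> k < size t ->
  (nd t k).2 + (nd t 0).1 = (nd t 0).2 + (nd t k).1 + k.
Proof.
move=> Ht; elim: k => [|k IH] Hk; first lia.
have := tile_stepP Ht Hk; have := IH (ltnW Hk); lia.
Qed.


Lemma nd_idx t (n : node) : n \in t -> exists2 k, k < size t & n = nd t k.
Proof. by move=> Hn; exists (index n t); rewrite ?index_mem // /nd nth_index. Qed.

Lemma st_nd t : st t = nd t 0.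
Proof. by rewrite /st /nd nth0. Qed.

Lemma en_nd t : en t = nd t (size t).-1.
Proof. by rewrite /en /nd nth_last. Qed.

Lemma L1 (Hleft : forall t, t \in T -> ~~ skew lam mu (NW (st t))) t s :
  t \in T -> s \in T -> t != s -> forall j i, i < size t -> j < size s ->
  (nd t i).1 + (nd s j).2 = (nd s j).1 + (nd t i).2 ->
  (nd s j).1 + (nd s j).2 < (nd t i).1 + (nd t i).2 -> i <= j.
Proof.
move=> Ht Hs Hts; elim=> [|j IH] i Hi Hj Hc Hh.
  have := Hleft s Hs; rewrite st_nd.
  have Hy := nd_skew Hs Hj; have Hx := nd_skew Ht Hi.
  have Hk : (nd t i) = ((nd s 0).1 + ((nd t i).1 - (nd s 0).1), (nd s 0).2 + ((nd t i).1 - (nd s 0).1)).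
    case: (nd t i) Hc Hh => a b /=; move=> *; congr (_, _); lia.
  rewrite Hk in Hx.
  have /andP[-> _] := skew_up Hy Hx ltac:(lia); done.
case: i Hi Hc Hh => [|i] Hi Hc Hh; first done.
have Sx := tile_stepP Ht Hi; have Sy := tile_stepP Hs Hj.
have Hx1 := skew_pos (nd_skew Ht (ltnW Hi)).
have Hy1 := skew_pos (nd_skew Hs (ltnW Hj)).
case: (ltnP ((nd s j).1 + (nd s j).2) ((nd t i).1 + (nd t i).2)) => Hlt.
  have := IH i (ltnW Hi) (ltnW Hj) ltac:(lia) Hlt; lia.
have E : nd t i = nd s j.
  move: Sx Sy Hc Hh Hlt; case: (nd t i) => a b; case: (nd s j) => c d /=.
  move=> *; congr (_, _); lia.
move/negP: Hts; elim.
apply/eqP; apply: (tile_uniq Ht Hs (n := nd t i)); first exact: nd_in (ltnW Hi).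
rewrite E; exact: nd_in (ltnW Hj).
Qed.

Lemma L2 (Hright : forall t, t \in T -> ~~ skew lam mu (NE (en t))) t s :
  t \in T -> s \in T -> t != s -> forall n j i, size s <= j + n -> i < size t -> j < size s ->
  (nd t i).1 + (nd s j).2 = (nd s j).1 + (nd t i).2 ->
  (nd s j).1 + (nd s j).2 < (nd t i).1 + (nd t i).2 -> size t - i <= size s - j.
Proof.
move=> Ht Hs Hts; elim=> [|n IH] j i Hn Hi Hj Hc Hh; first lia.
case: (ltnP j.+1 (size s)) => Hj1; last first.
  have Ej : j = (size s).-1 by lia.
  have := Hright s Hs; rewrite en_nd -Ej.
  have Hy := nd_skew Hs Hj; have Hx := nd_skew Ht Hi.
  have Hk : (nd t i) = ((nd s j).1 + ((nd t i).1 - (nd s j).1), (nd s j).2 + ((nd t i).1 - (nd s j).1)).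
    case: (nd t i) Hc Hh => a b /=; move=> *; congr (_, _); lia.
  rewrite Hk in Hx.
  have /andP[_ ->] := skew_up Hy Hx ltac:(lia); done.
case: (ltnP i.+1 (size t)) => Hi1; last lia.
have Sx := tile_stepP Ht Hi1; have Sy := tile_stepP Hs Hj1.
have Hx1 := skew_pos (nd_skew Ht Hi).
have Hy1 := skew_pos (nd_skew Hs Hj).
case: (ltnP ((nd s j.+1).1 + (nd s j.+1).2) ((nd t i.+1).1 + (nd t i.+1).2)) => Hlt.
  have := IH j.+1 i.+1 ltac:(lia) Hi1 Hj1 ltac:(lia) Hlt; lia.
have E : nd t i.+1 = nd s j.+1.
  move: Sx Sy Hc Hh Hlt; case: (nd t i.+1) => a b; case: (nd s j.+1) => c d /=.
  move=> *; congr (_, _); lia.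
move/negP: Hts; elim.
apply/eqP; apply: (tile_uniq Ht Hs (n := nd t i.+1)); first exact: nd_in Hi1.
rewrite E; exact: nd_in Hj1.
Qed.

End Aux.

Lemma ltn_pred_size (A : Type) (u : seq A) k : k < size u -> (size u).-1 < size u.
Proof. case: u => //= _ u _; exact: ltnSn. Qed.

Lemma int_le (a b c d : nat) : (a%:Z - b%:Z <= c%:Z - d%:Z)%R -> a + d <= c + b.
Proof. lia. Qed.

Lemma int_le' (a b c d : nat) : a + d <= c + b -> (a%:Z - b%:Z <= c%:Z - d%:Z)%R.
Proof. lia. Qed.

Lemma pair_neq (p q : node) : p <> q -> p.1 <> q.1 \/ p.2 <> q.2.
Proof.
case: p q => a b [c d] /= H.
case: (eqVneq a c) => [E|/eqP]; last by left.
case: (eqVneq b d) => [E'|/eqP]; last by right.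
by case: H; rewrite E E'.
Qed.

Theorem proposition4p1 (lam mu : seq nat) (T : seq (seq node)) :
  is_partition lam -> is_partition mu -> diag_sub mu lam ->
  dyck_tiling lam mu T ->
  (left_cover_expansive lam mu T <->
     (forall t, t \in T -> ~~ skew lam mu (NW (st t)))) /\
  (right_cover_expansive lam mu T <->
     (forall t, t \in T -> ~~ skew lam mu (NE (en t)))).
Proof.
move=> Hlam Hmu _ HT.
have Hne : forall t, t \in T -> 0 < size t.
  case: HT => Hd _ _ t /Hd /andP[]; by case: t.
have colnd := col_nd Hlam Hmu HT.
have stepP := tile_stepP Hlam Hmu HT.
split; split.
- move=> HL t Ht; apply/negP => Hsk.
  have Hst : st t \in t by rewrite st_nd; apply: nd_in; exact: Hne.
  have HSE : SE (NW (st t)) = st t by case: (st t).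
  have Hsk2 : skew lam mu (SE (NW (st t))) by rewrite HSE; case: HT => _ Hin _; exact: Hin Ht Hst.
  have := HL _ Hsk Hsk2; rewrite HSE (tile_of_eq HT Ht Hst).
  have [Hu Ha] := tile_of_in HT Hsk.
  have [k Hk Ek] := nd_idx Ha.
  have C := colnd _ _ Hu Hk.
  rewrite -Ek in C; rewrite (st_nd (tile_of T _)) /column.
  move: C; rewrite /NW /=; lia.
- move=> HL a Ha Hb.
  have [Ht Hat] := tile_of_in HT Ha.
  have [Hs Hbs] := tile_of_in HT Hb.
  move: Ht Hat Hs Hbs.
  set t := tile_of T a; set s := tile_of T (SE a) => Ht Hat Hs Hbs.
  have [Ha1 Ha2] := skew_pos Ha.
  case: (eqVneq t s) => [<-|Hts]; first by [].
  have [i Hi Ei] := nd_idx Hat.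
  have [j Hj Ej] := nd_idx Hbs.
  case: j Hj Ej => [|j] Hj Ej.
    have : skew lam mu (NW (st s)).
      rewrite st_nd -Ej /NW /SE /=.
      suff -> : (a.1.-1.+1, a.2) = a by [].
      by rewrite prednK //; exact: esym (surjective_pairing a).
    by rewrite (negbTE (HL s Hs)).
  have Sy := stepP _ _ Hs Hj.
  have Hy1 := skew_pos (nd_skew HT Hs (ltnW Hj)).
  have Nin : nd s j <> a.
    move=> E; move/negP: Hts; apply; apply/eqP.
    apply: (tile_uniq HT Ht Hs Hat); rewrite -E; exact: nd_in (ltnW Hj).
  have Nin' : (nd s j).1 <> a.1 \/ (nd s j).2 <> a.2.
    exact: pair_neq.
  have H := L1 Hlam Hmu HT HL Ht Hs Hts (i := i) (j := j) Hi (ltnW Hj).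
  move: Ej; rewrite /SE => Ej.
  have E1 : (nd s j.+1).1 = a.1.-1 by rewrite -Ej.
  have E2 : (nd s j.+1).2 = a.2 by rewrite -Ej.
  have Ct := colnd _ _ Ht Hi; have Cs := colnd _ _ Hs Hj.
  rewrite -Ei in Ct.
  rewrite !st_nd /column.
  rewrite -Ei in H.
  have {}H := H ltac:(lia) ltac:(lia).
  lia.
- move=> HR t Ht; apply/negP => Hsk.
  have Hen : en t \in t by rewrite en_nd; apply: nd_in; exact: ltn_pred_size (Hne t Ht).
  have HSW : SW (NE (en t)) = en t by case: (en t).
  have Hsk2 : skew lam mu (SW (NE (en t))) by rewrite HSW; case: HT => _ Hin _; exact: Hin Ht Hen.
  have := HR _ Hsk Hsk2; rewrite HSW (tile_of_eq HT Ht Hen).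
  have [Hu Ha] := tile_of_in HT Hsk.
  have [k Hk Ek] := nd_idx Ha.
  have C := colnd _ _ Hu Hk.
  have C2 := colnd _ _ Hu (ltn_pred_size Hk).
  rewrite -Ek in C; rewrite (en_nd (tile_of T _)) /column.
  have EN1 : (NE (en t)).1 = (en t).1 by [].
  have EN2 : (NE (en t)).2 = (en t).2.+1 by [].
  move/int_le. set u := tile_of T (NE (en t)) in C C2 Hk *. set A := nd u 0 in C C2 *. set L := nd u (size u).-1 in C2 *. set E := NE (en t) in C EN1 EN2. set sz := size u in Hk C2 *. lia.
- move=> HR a Ha Hb.
  have [Ht Hat] := tile_of_in HT Ha.
  have [Hs Hbs] := tile_of_in HT Hb.
  move: Ht Hat Hs Hbs.
  set t := tile_of T a; set s := tile_of T (SW a) => Ht Hat Hs Hbs.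
  have [Ha1 Ha2] := skew_pos Ha.
  case: (eqVneq t s) => [<-|Hts]; first by [].
  have [i Hi Ei] := nd_idx Hat.
  have [j Hj Ej] := nd_idx Hbs.
  case: (ltnP j.+1 (size s)) => Hj1; last first.
    have Ejs : j = (size s).-1.
      apply/eqP; rewrite -(eqn_add2r 1) !addn1 prednK; last exact: leq_ltn_trans (leq0n j) Hj.
      by rewrite eqn_leq Hj Hj1.
    have : skew lam mu (NE (en s)).
      rewrite en_nd -Ejs -Ej /NE /SW /=.
      suff -> : (a.1, a.2.-1.+1) = a by [].
      by rewrite prednK //; exact: esym (surjective_pairing a).
    by rewrite (negbTE (HR s Hs)).
  have Sy := stepP _ _ Hs Hj1.
  have Hy1 := skew_pos (nd_skew HT Hs Hj1).
  have Nin : nd s j.+1 <> a.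
    move=> E; move/negP: Hts; apply; apply/eqP.
    apply: (tile_uniq HT Ht Hs Hat); rewrite -E; exact: nd_in Hj1.
  have Nin' : (nd s j.+1).1 <> a.1 \/ (nd s j.+1).2 <> a.2 by exact: pair_neq.
  have H := L2 Hlam Hmu HT HR Ht Hs Hts (n := size s) (i := i) (j := j.+1) (leq_addl _ _) Hi Hj1.
  move: Ej; rewrite /SW => Ej.
  have E1 : (nd s j).1 = a.1 by rewrite -Ej.
  have E2 : (nd s j).2 = a.2.-1 by rewrite -Ej.
  have Ct := colnd _ _ Ht Hi; have Cs := colnd _ _ Hs Hj1; have Cs0 := colnd _ _ Hs Hj.
  have Ct2 := colnd _ _ Ht (ltn_pred_size Hi); have Cs2 := colnd _ _ Hs (ltn_pred_size Hj).
  rewrite -Ei in Ct H.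
  rewrite !en_nd /column.
  have {}H := H ltac:(lia) ltac:(lia).
  apply: int_le'.
  set szt := size t in Hi Ct2 H *. set szs := size s in Hj Hj1 Cs2 H *. lia.
Qed.
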